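(* For every theory $\Sigma$ and every formula $A \Rightarrow B$: $\Sigma \vdash A \Rightarrow B$ if and only if $\Sigma \models A \Rightarrow B$.
   Context: $Y$ is a non-empty finite set of attributes and $\mathcal{T}_Y = \{y^i \mid y \in Y, i \in \mathbb{Z}\}$; $M + j = \{y^{i+j} \mid y^i \in M\}$. A formula is $A \Rightarrow B$ with $A,B$ finite subsets of $\mathcal{T}_Y$; $M \models A \Rightarrow B$ means that for every $i \in \mathbb{Z}$, $A+i \subseteq M$ implies $B+i \subseteq M$; $\Sigma \models A \Rightarrow B$ means $A \Rightarrow B$ is true in every $M \subseteq \mathcal{T}_Y$ in which all formulas of the theory $\Sigma$ are true. Deduction rules (for arbitrary finite $A,B,C,D \subseteq \mathcal{T}_Y$, $i \in \mathbb{Z}$): (Ax) infer $A \cup B \Rightarrow A$; (Cut) from $A \Rightarrow B$ and $B \cup C \Rightarrow D$ infer $A \cup C \Rightarrow D$; (Shf) from $A \Rightarrow B$ infer $A+i \Rightarrow B+i$. $\Sigma \vdash A \Rightarrow B$ means there is a finite sequence of formulas ending with $A \Rightarrow B$ in which each member is in $\Sigma$ or is the conclusion of one of these rules applied to earlier members. *)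

(* Defs.v *)
From mathcomp Require Import all_boot all_algebra.
From mathcomp Require Import finmap.
Set Implicit Arguments. Unset Strict Implicit. Unset Printing Implicit Defensive.
Local Open Scope fset_scope.

(* Terms T_Y = { y^i | y in Y, i in Z }, represented as pairs (y, i). *)
Definition term (Y : finType) := (Y * int)%type.

Definition shift (Y : finType) (A : {fset term Y}) (j : int) : {fset term Y} :=
  [fset ((x.1, (x.2 + j)%R) : term Y) | x in A].

Record formula (Y : finType) := Formula { lhs : {fset term Y}; rhs : {fset term Y} }.

(* Arbitrary (possibly infinite) subsets M of T_Y. *)
Definition tset (Y : finType) := term Y -> Prop.

Definition fsub (Y : finType) (A : {fset term Y}) (M : tset Y) : Prop :=
  forall t, t \in A -> M t.

Definition holds (Y : finType) (M : tset Y) (f : formula Y) : Prop :=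
  forall i : int, fsub (shift (lhs f) i) M -> fsub (shift (rhs f) i) M.

Definition entails (Y : finType) (Sigma : formula Y -> Prop) (f : formula Y) : Prop :=
  forall M : tset Y, (forall g, Sigma g -> holds M g) -> holds M f.

Inductive provable (Y : finType) (Sigma : formula Y -> Prop) : formula Y -> Prop :=
  | pr_hyp f : Sigma f -> provable Sigma f
  | pr_ax (A B : {fset term Y}) : provable Sigma (Formula (A `|` B) A)
  | pr_cut (A B C D : {fset term Y}) :
      provable Sigma (Formula A B) -> provable Sigma (Formula (B `|` C) D) ->
      provable Sigma (Formula (A `|` C) D)
  | pr_shf (A B : {fset term Y}) (i : int) :
      provable Sigma (Formula A B) -> provable Sigma (Formula (shift A i) (shift B i)).

(* Main.v *)
Require Import Defs.
From mathcomp Require Import all_boot all_algebra.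
From mathcomp Require Import finmap.
Set Implicit Arguments. Unset Strict Implicit. Unset Printing Implicit Defensive.
Import GRing.Theory.
Local Open Scope fset_scope.

Section S.
Variable Y : finType.

Lemma in_shift (A : {fset term Y}) i (t : term Y) :
  (t \in shift A i) = ((t.1, (t.2 - i)%R) \in A).
Proof.
apply/imfsetP/idP.
- by case=> [[y k]] /= kA ->; rewrite /= addrK.
- move=> H; exists (t.1, (t.2 - i)%R) => //=; rewrite subrK; by case: t {H}.
Qed.

Lemma shift0 (A : {fset term Y}) : shift A 0 = A.
Proof. apply/fsetP => t; rewrite in_shift subr0; by case: t. Qed.

Variable Sigma : formula Y -> Prop.
Notation pv A B := (provable Sigma (Formula A B)).

Lemma proj A B B' : pv A B -> B' `<=` B -> pv A B'.
Proof.
move=> H /fsetUidPr E.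
have ax : pv (B `|` fset0) B' by rewrite fsetU0 -{1}E; exact: pr_ax.
have := pr_cut H ax. by rewrite fsetU0.
Qed.

Lemma unionr A B1 B2 : pv A B1 -> pv A B2 -> pv A (B1 `|` B2).
Proof.
move=> H1 H2.
have ax := pr_ax Sigma (B1 `|` B2) A.
have e : (B1 `|` B2) `|` A = B2 `|` (B1 `|` A).
  by rewrite fsetUCA fsetUA.
rewrite e in ax.
have := pr_cut H2 ax.
have e2 : A `|` (B1 `|` A) = B1 `|` A by rewrite fsetUCA fsetUid.
rewrite e2 => H3.
have := pr_cut H1 H3. by rewrite fsetUid.
Qed.

Lemma empt A : pv A fset0.
Proof. have := pr_ax Sigma fset0 A. by rewrite fset0U. Qed.

Definition F (s : seq (term Y)) :=
  foldr (fun x acc => [fset x] `|` acc) fset0 s.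

Lemma inF s x : (x \in F s) = (x \in s).
Proof. elim: s => [|y s IH] //=; by rewrite in_fsetU in_fset1 IH in_cons. Qed.

Lemma combine A S : (forall t, t \in S -> pv A [fset t]) -> pv A S.
Proof.
move=> H.
have -> : S = F S by apply/fsetP => x; rewrite inF.
have : forall t, t \in (S : seq _) -> pv A [fset t] by [].
elim: (S : seq _) => [|y s IH] Hs /=; first exact: empt.
apply: unionr; first by apply: Hs; rewrite in_cons eqxx.
apply: IH => t ts; apply: Hs; by rewrite in_cons ts orbT.
Qed.

Lemma sound f : provable Sigma f -> entails Sigma f.
Proof.
elim => {f}.
- by move=> f Sf M HM; apply: HM.
- move=> A B M _ i /= H t tA; apply: H.
  by move: tA; rewrite !in_shift in_fsetU => ->.
- move=> A B C D _ IH1 _ IH2 M HM i /= H.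
  apply: (IH2 M HM i) => /= t; rewrite in_shift in_fsetU => /orP [tB|tC].
  + apply: (IH1 M HM i) => /=; first by move=> u uA; apply: H; move: uA; rewrite !in_shift in_fsetU => ->.
    by rewrite in_shift.
  + by apply: H; rewrite in_shift in_fsetU tC orbT.
- move=> A B i _ IH M HM j /= H t tB.
  suff: Defs.fsub (shift A (i + j)%R) M.
    move=> hA; apply: (IH M HM (i + j)%R hA).
    move: tB; by rewrite !in_shift /= (addrC i j) opprD addrA.
  move=> u; rewrite in_shift => uA; apply: H.
  move: uA; by rewrite !in_shift /= (addrC i j) opprD addrA.
Qed.

End S.

Theorem theorem7 (Y : finType) (hY : 0 < #|Y|) (Sigma : formula Y -> Prop)
    (A B : {fset term Y}) :
  provable Sigma (Formula A B) <-> entails Sigma (Formula A B).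
Proof.
split; first exact: sound.
move=> H.
pose M : tset Y := fun t => provable Sigma (Formula A [fset t]).
have HM : forall g, Sigma g -> holds M g.
  case=> C D Sg i /= HC t tD.
  have h1 : provable Sigma (Formula A (shift C i)) by apply: combine.
  have h2 := pr_shf i (pr_hyp Sg); rewrite -[shift C i]fsetU0 in h2.
  have := pr_cut (C := fset0) h1 h2; rewrite fsetU0 => h3.
  apply: proj h3 _; apply/fsubsetP => u; by rewrite in_fset1 => /eqP ->.
have := H M HM 0%R; rewrite /= !shift0 => HB.
apply: combine; apply: HB => t tA.
have ax := pr_ax Sigma A fset0; rewrite fsetU0 in ax.
apply: proj ax _; apply/fsubsetP => u; by rewrite in_fset1 => /eqP ->.
Qed.
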